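(* Fix $\rho>0$, integers $M\ge N\ge1$ and $c_0,\dots,c_{N-1}>0$, and let $C_m$ ($1\le m\le N$) be as defined below. Then for every $1\le m\le N$ and every $A=\mathbf{u}\mathbf{u}^*\in\mathbb{P}^1_N(\overline{D}(0,\rho))$, every principal $m\times m$ submatrix of $$L_m:=C_m\bigl(c_{N-m}\mathbf{1}_{N\times N}+c_{N-m+1}A+\cdots+c_{N-1}A^{\circ(m-1)}\bigr)-A^{\circ(m+M-N)}$$ is positive semidefinite. In particular (case $m=N$) the polynomial $c_0+\cdots+c_{N-1}z^{N-1}-\mathcal{C}(\mathbf{c};z^M;N,\rho)^{-1}z^M$ preserves positivity entrywise on $\mathbb{P}^1_N(\overline{D}(0,\rho))$.
   Context: $\mathbb{P}^1_N(\overline{D}(0,\rho))$ is the set of $N\times N$ positive semidefinite matrices of rank at most one with entries in the closed disc of radius $\rho$; $A^{\circ n}$ is the entrywise power, $A^{\circ0}=\mathbf{1}_{N\times N}$ the all-ones matrix. $C_m:=\sum_{j=0}^{m-1}\binom{M-N+m}{j}^2\binom{M-N+m-j-1}{m-j-1}^2\rho^{m+M-N-j}/c_{N-m+j}$, and $\mathcal{C}(\mathbf{c};z^M;N,\rho):=C_N=\sum_{j=0}^{N-1}\binom{M}{j}^2\binom{M-j-1}{N-j-1}^2\rho^{M-j}/c_j$. *)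

(* Defs.v *)
From HB Require Import structures.
From mathcomp Require Import all_boot all_order all_algebra.
Set Implicit Arguments. Unset Strict Implicit. Unset Printing Implicit Defensive.
Import Order.TTheory GRing.Theory Num.Theory.
Local Open Scope ring_scope.

Definition ctrmx (C : numClosedFieldType) m n (A : 'M[C]_(m, n)) : 'M[C]_(n, m) :=
  map_mx Num.conj A^T.

Definition psd (C : numClosedFieldType) n (A : 'M[C]_n) : Prop :=
  ctrmx A = A /\ forall v : 'cV[C]_n, 0 <= (ctrmx v *m A *m v) 0 0.

Definition P1 (C : numClosedFieldType) (N : nat) (rho : C) (A : 'M[C]_N) : Prop :=
  psd A /\ (\rank A <= 1)%N /\ forall i j, `|A i j| <= rho.

(* entrywise (Hadamard) power; hpow A 0 is the all-ones matrix *)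
Definition hpow (C : numClosedFieldType) m n (A : 'M[C]_(m, n)) (k : nat) : 'M[C]_(m, n) :=
  \matrix_(i, j) (A i j) ^+ k.

Definition Cconst (C : numClosedFieldType) (c : nat -> C) (M N : nat) (rho : C) (m : nat) : C :=
  \sum_(j < m)
    ('C(M - N + m, j) ^ 2 * 'C(M - N + m - j - 1, m - j - 1) ^ 2)%:R
      * rho ^+ (m + M - N - j) / c (N - m + j)%N.

Definition Lmat (C : numClosedFieldType) (c : nat -> C) (M N : nat) (rho : C) (m : nat)
    (A : 'M[C]_N) : 'M[C]_N :=
  Cconst c M N rho m *: (\sum_(k < m) c (N - m + k)%N *: hpow A k)
    - hpow A (m + M - N).

Definition fpoly_entrywise (C : numClosedFieldType) (c : nat -> C) (M N : nat) (rho : C)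
    (A : 'M[C]_N) : 'M[C]_N :=
  \matrix_(i, j) (\sum_(k < N) c k * (A i j) ^+ k
                  - (Cconst c M N rho N)^-1 * (A i j) ^+ M).

Arguments Lmat [C] c M N rho m A.
Arguments fpoly_entrywise [C] c M N rho A.
Arguments P1 [C] N rho A.

(* Main.v *)
Set Warnings "-notation-overridden,-ambiguous-paths,-notation-incompatible-prefix".
From HB Require Import structures.
From mathcomp Require Import all_boot all_order all_algebra.
From mathcomp Require Import zify ring lra.
Require Import Defs.
Set Implicit Arguments. Unset Strict Implicit. Unset Printing Implicit Defensive.
Import Order.TTheory GRing.Theory Num.Theory.
Local Open Scope ring_scope.

Fixpoint esym (C : numClosedFieldType) (L : seq C) (b : nat) : C :=
  match L with
  | [::] => (b == 0)%:R
  | y :: L' => (if b is b'.+1 then y * esym L' b' else 0) + esym L' b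
  end.

Fixpoint hsym (C : numClosedFieldType) (L : seq C) (d : nat) : C :=
  match L with
  | [::] => (d == 0)%:R
  | y :: L' => let fix g d := match d with 0 => 1 | d'.+1 => y * g d' + hsym L' d'.+1 end in g d
  end.

Fixpoint Tsym (C : numClosedFieldType) (L : seq C) (a b : nat) : C :=
  match L with
  | [::] => 0
  | y :: L' => y * esym L' b * hsym (y :: L') a + Tsym L' a b
  end.

Definition Esum (C : numClosedFieldType) (L : seq C) (z : C) : C :=
  \sum_(k < (size L).+1) (-1) ^+ (size L - k) * esym L (size L - k) * z ^+ k.

Definition Gsum (C : numClosedFieldType) (L : seq C) (a : nat) (z : C) : C :=
  \sum_(k < size L) (-1) ^+ ((size L).-1 - k) * Tsym L a ((size L).-1 - k) * z ^+ k.

Lemma hsym_cons0 (C : numClosedFieldType) (y : C) L : hsym (y :: L) 0 = 1.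
Proof. by []. Qed.

Lemma hsym_consS (C : numClosedFieldType) (y : C) L d :
  hsym (y :: L) d.+1 = y * hsym (y :: L) d + hsym L d.+1.
Proof. by []. Qed.

Lemma esym0 (C : numClosedFieldType) (L : seq C) : esym L 0 = 1.
Proof. by elim: L => [|y L IH] //=; rewrite IH add0r. Qed.

Lemma esym_big (C : numClosedFieldType) (L : seq C) b : (size L < b)%N -> esym L b = 0.
Proof.
elim: L b => [|y L IH] [|b] //= H.
rewrite IH ?IH ?mulr0 ?addr0 //; lia.
Qed.

Lemma Tsym_big (C : numClosedFieldType) (L : seq C) a b : (size L <= b)%N -> Tsym L a b = 0.
Proof.
elim: L => [|y L IH] //= H.
rewrite esym_big ?IH ?mulr0 ?mul0r ?addr0 //; lia.
Qed.

Lemma Esum_cons (C : numClosedFieldType) (y : C) L z :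
  Esum (y :: L) z = (z - y) * Esum L z.
Proof.
rewrite /Esum /=.
set n := size L.
rewrite big_ord_recr /= subnn /= add0r esym0 expr0 !mul1r.
have H1 : \sum_(i < n.+1) (-1) ^+ (n.+1 - i) * ((if (n.+1 - i)%N is b'.+1 then y * esym L b' else 0) + esym L (n.+1 - i)) * z ^+ i
  = - y * (\sum_(k < n.+1) (-1) ^+ (n - k) * esym L (n - k) * z ^+ k)
    + \sum_(i < n.+1) (-1) ^+ (n.+1 - i) * esym L (n.+1 - i) * z ^+ i.
  rewrite mulr_sumr -big_split /=; apply: eq_bigr => i _.
  have Hi : (n.+1 - i = (n - i).+1)%N by have := ltn_ord i; lia.
  rewrite Hi exprS; ring.
rewrite H1 -addrA.
have H2 : \sum_(i < n.+1) (-1) ^+ (n.+1 - i) * esym L (n.+1 - i) * z ^+ i + z ^+ n.+1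
  = z * (\sum_(k < n.+1) (-1) ^+ (n - k) * esym L (n - k) * z ^+ k).
  rewrite big_ord_recl /= subn0 esym_big // mulr0 mul0r add0r.
  rewrite [X in X + _](eq_bigr (fun i : 'I_n => z * ((-1) ^+ (n - i) * esym L (n - i) * z ^+ i ))); last first.
    move=> i _ /=. rewrite /bump /= add1n subSS exprS. ring.
  rewrite -mulr_sumr [in RHS]big_ord_recr /= subnn esym0 expr0 !mul1r mulrDr exprS //.
by rewrite H2; ring.
Qed.

Lemma Esum_mem (C : numClosedFieldType) (L : seq C) x : x \in L -> Esum L x = 0.
Proof.
elim: L => [|y L IH] //; rewrite inE Esum_cons => /orP [/eqP ->| /IH ->].
  by rewrite subrr mul0r.
by rewrite mulr0.
Qed.

Lemma hdiff (C : numClosedFieldType) (z y : C) L d :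
  hsym (z :: L) d.+1 - hsym (y :: L) d.+1 = (z - y) * hsym (z :: y :: L) d.
Proof.
elim: d => [|d IH].
  by rewrite !hsym_consS !hsym_cons0; ring.
rewrite (hsym_consS z L d.+1) (hsym_consS y L d.+1) (hsym_consS z (y :: L) d).
have -> : hsym (z :: L) d.+1 = hsym (y :: L) d.+1 + (z - y) * hsym [:: z, y & L] d.
  by rewrite -IH; ring.
ring.
Qed.

Lemma Gsum_cons (C : numClosedFieldType) (y : C) L a z :
  Gsum (y :: L) a z = y * hsym (y :: L) a * Esum L z + z * Gsum L a z.
Proof.
rewrite /Gsum /Esum /=.
set n := size L.
have -> : \sum_(k < n.+1) (-1) ^+ (n - k) * (y * esym L (n - k) * hsym (y :: L) a + Tsym L a (n - k)) * z ^+ k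
  = y * hsym (y :: L) a * (\sum_(k < n.+1) (-1) ^+ (n - k) * esym L (n - k) * z ^+ k)
    + \sum_(k < n.+1) (-1) ^+ (n - k) * Tsym L a (n - k) * z ^+ k.
  rewrite mulr_sumr -big_split /=; apply: eq_bigr => i _; ring.
congr (_ + _).
rewrite big_ord_recl /= subn0 Tsym_big // mulr0 mul0r add0r mulr_sumr.
apply: eq_bigr => i _ /=.
rewrite /bump /= add1n exprS.
have -> : (n - i.+1 = n.-1 - i)%N by lia.
ring.
Qed.

Lemma hsym1 (C : numClosedFieldType) (z : C) a : hsym [:: z] a = z ^+ a.
Proof. elim: a => [|a IH]; first by []. by rewrite hsym_consS IH /= addr0 exprS. Qed.

Lemma main_id (C : numClosedFieldType) (L : seq C) a z :
  z ^+ (a + size L) - Gsum L a z = Esum L z * hsym (z :: L) a.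
Proof.
elim: L z => [|y L IH] z.
  rewrite hsym1 /Gsum /Esum big_ord0 big_ord1 /= addn0 subr0 expr0 !mul1r //.
rewrite Gsum_cons Esum_cons.
have E1 : z ^+ (a + size (y :: L)) = z * z ^+ (a + size L) by rewrite addnS exprS.
rewrite E1.
have E2 : z ^+ (a + size L) = Gsum L a z + Esum L z * hsym (z :: L) a by rewrite -IH; ring.
rewrite E2.
have E3 := hdiff z y L a.
rewrite !hsym_consS in E3.
have E4 : z * hsym (z :: L) a = y * hsym (y :: L) a + (z - y) * hsym [:: z, y & L] a by rewrite -E3; ring.
transitivity (Esum L z * (z * hsym (z :: L) a) - y * hsym (y :: L) a * Esum L z); first ring.
rewrite E4; ring.
Qed.

Lemma esym_bound (C : numClosedFieldType) (L : seq C) (r : C) b :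
  0 <= r -> (forall x, x \in L -> `|x| <= r) ->
  `|esym L b| <= ('C(size L, b))%:R * r ^+ b.
Proof.
move=> r0; elim: L b => [|y L IH] b HL.
  by case: b => [|b] /=; rewrite ?normr1 ?expr0 ?mulr1 ?normr0 ?mul0r.
case: b => [|b]; first by rewrite esym0 normr1 bin0 expr0 mulr1.
rewrite /= binS natrD mulrDl.
have HL' : forall x, x \in L -> `|x| <= r by move=> x xL; apply: HL; rewrite inE xL orbT.
apply: (le_trans (ler_normD _ _)); rewrite addrC; apply: lerD; first exact: IH.
rewrite normrM exprS mulrCA; apply: ler_pM => //; first by apply: HL; rewrite inE eqxx.
exact: IH.
Qed.

Lemma hsym_bound (C : numClosedFieldType) (L : seq C) (r : C) d :
  0 <= r -> (forall x, x \in L -> `|x| <= r) ->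
  `|hsym L d| <= ('C(d + size L - 1, d))%:R * r ^+ d.
Proof.
move=> r0; elim: L d => [|y L IH] d HL.
  case: d => [|d] /=; rewrite ?normr1 ?expr0 ?mulr1 ?normr0 //.
  by rewrite addn0 subn1 /= bin_small // mul0r.
have HL' : forall x, x \in L -> `|x| <= r by move=> x xL; apply: HL; rewrite inE xL orbT.
have Hy : `|y| <= r by apply: HL; rewrite inE eqxx.
elim: d => [|d IHd]; first by rewrite hsym_cons0 normr1 bin0 expr0 mulr1.
rewrite hsym_consS.
have -> : (d.+1 + size (y :: L) - 1 = (d + size L).+1)%N by rewrite /=; lia.
rewrite binS natrD mulrDl.
apply: (le_trans (ler_normD _ _)); rewrite addrC; apply: lerD.
  have := IH d.+1 HL'. by have -> : (d.+1 + size L - 1 = d + size L)%N by lia.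
rewrite normrM exprS mulrCA; apply: ler_pM => //.
by move: IHd; have -> : (d + size (y :: L) - 1 = d + size L)%N by rewrite /=; lia.
Qed.

Definition TB (m a b : nat) : nat := \sum_(s < m) 'C(s, b) * 'C(a + s, a).

Lemma Tsym_bound (C : numClosedFieldType) (L : seq C) (r : C) a b :
  0 <= r -> (forall x, x \in L -> `|x| <= r) ->
  `|Tsym L a b| <= (TB (size L) a b)%:R * r ^+ (a + b + 1).
Proof.
move=> r0; elim: L => [|y L IH] HL.
  by rewrite /= normr0 /TB big_ord0 mul0r.
have HL' : forall x, x \in L -> `|x| <= r by move=> x xL; apply: HL; rewrite inE xL orbT.
have Hy : `|y| <= r by apply: HL; rewrite inE eqxx.
rewrite /= /TB big_ord_recr /= -/(TB (size L) a b) natrD mulrDl.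
apply: (le_trans (ler_normD _ _)); rewrite addrC; apply: lerD; first exact: IH.
have -> : r ^+ (a + b + 1) = r * r ^+ b * r ^+ a by rewrite -!exprS -exprD; congr (_ ^+ _); lia.
rewrite natrM !normrM.
have := hsym_bound a r0 HL; have -> : (a + size (y :: L) - 1 = a + size L)%N by rewrite /=; lia.
move=> Hh.
have He := esym_bound b r0 HL'.
have -> : ('C(size L, b)%:R * 'C(a + size L, a)%:R * (r * r ^+ b * r ^+ a)) =
  (r * ('C(size L, b)%:R * r ^+ b)) * ('C(a + size L, a)%:R * r ^+ a) by ring.
apply: ler_pM => //; first by rewrite mulr_ge0.
apply: ler_pM => //.
Qed.

Lemma bin_key (m a b : nat) : ('C(a + m, a + b) * 'C(a + b, b) = 'C(m, b) * 'C(a + m, a))%N.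
Proof.
case: (leqP b m) => Hbm; last first.
  by rewrite (bin_small Hbm) (bin_small (_ : a + m < a + b)%N) ?mul0n //; lia.
have K : (0 < a`! * b`! * (m - b)`!)%N by rewrite !muln_gt0 !fact_gt0.
apply/eqP; rewrite -(eqn_pmul2r K); apply/eqP.
have h1 := bin_fact (_ : a + b <= a + m)%N; have h2 := bin_fact (leq_addl a b).
have h3 := bin_fact Hbm; have h4 := bin_fact (leq_addr m a).
have e1 : (a + m - (a + b) = m - b)%N by lia.
have e2 : (a + b - b = a)%N by lia.
have e3 : (a + m - a = m)%N by lia.
rewrite e1 in h1; rewrite e2 in h2; rewrite e3 in h4.
have -> : ('C(a + m, a + b) * 'C(a + b, b) * (a`! * b`! * (m - b)`!) =
   'C(a + m, a + b) * ((a + b)`! * (m - b)`!))%N.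
  rewrite -h2; ring.
rewrite h1; last lia.
rewrite -h4 -h3; ring.
Qed.

Lemma TB_closed m a b : TB m a b = ('C(a + m, a + b + 1) * 'C(a + b, b))%N.
Proof.
elim: m => [|m IH].
  by rewrite /TB big_ord0 addn0 bin_small ?mul0n //; lia.
rewrite /TB big_ord_recr /= -/(TB m a b) IH.
have -> : (a + m.+1 = (a + m).+1)%N by lia.
have -> : (a + b + 1 = (a + b).+1)%N by lia.
rewrite binS mulnDl bin_key.
done.
Qed.

Lemma term_id (C : numClosedFieldType) (w s a l : C) : 0 < w ->
  w * `|s - l * a^* / w| ^+ 2 = w * `|s| ^+ 2 - l^* * (a * s) - l * (a * s)^* + l * l^* * (`|a| ^+ 2 / w).
Proof.
move=> w0; have wn : w != 0 by rewrite gt_eqF.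
have wc : w^* = w by rewrite geC0_conj // ltW.
rewrite !normCK !(rmorphB, rmorphM) /= fmorphV /= conjCK wc.
by field.
Qed.

Lemma CSineq (C : numClosedFieldType) m (a s w : 'I_m -> C) : (forall k, 0 < w k) ->
  `|\sum_k a k * s k| ^+ 2 <= (\sum_k `|a k| ^+ 2 / w k) * (\sum_k w k * `|s k| ^+ 2).
Proof.
move=> wpos.
set A := \sum_k `|a k| ^+ 2 / w k; set B := \sum_k w k * `|s k| ^+ 2; set t := \sum_k a k * s k.
have A0 : 0 <= A by apply: sumr_ge0 => k _; apply: divr_ge0; [exact: exprn_ge0 | exact: ltW].
have B0 : 0 <= B by apply: sumr_ge0 => k _; apply: mulr_ge0; [exact: ltW | exact: exprn_ge0].
have [AZ|AP] := eqVneq A 0.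
  have ak0 : forall k, a k = 0.
    move=> k; have := @psumr_eq0P _ _ xpredT (fun k => `|a k| ^+ 2 / w k) (fun k _ => divr_ge0 (exprn_ge0 2 (normr_ge0 (a k))) (ltW (wpos k))) AZ k isT.
    move/eqP; rewrite mulf_eq0 invr_eq0 (gt_eqF (wpos k)) orbF expf_eq0 /= normr_eq0.
    by move/eqP.
  rewrite /t big1 ?normr0 ?expr2 ?mulr0 ?AZ ?mul0r //.
  by move=> k _; rewrite ak0 mul0r.
have Apos : 0 < A by rewrite lt_def AP A0.
pose lam := t / A.
have key : \sum_k w k * `|s k - lam * (a k)^* / w k| ^+ 2 = B - lam^* * t - lam * t^* + lam * lam^* * A.
  transitivity (\sum_k (w k * `|s k| ^+ 2 - lam^* * (a k * s k) - lam * (a k * s k)^* + lam * lam^* * (`|a k| ^+ 2 / w k))).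
    by apply: eq_bigr => k _; rewrite term_id.
  rewrite !big_split /= !sumrN -!mulr_sumr /t rmorph_sum.
  by [].
have : 0 <= B - lam^* * t - lam * t^* + lam * lam^* * A.
  rewrite -key; apply: sumr_ge0 => k _; apply: mulr_ge0; [exact: ltW | exact: exprn_ge0].
have Ac : A^* = A by rewrite geC0_conj.
have -> : B - lam^* * t - lam * t^* + lam * lam^* * A = B - `|t| ^+ 2 / A.
  rewrite /lam normCK !rmorphM /= fmorphV /= Ac.
  by field.
rewrite subr_ge0 => H.
have -> : `|t| ^+ 2 = A * (`|t| ^+ 2 / A) by field.
by rewrite ler_wpM2l.
Qed.

Lemma rank1_fact (C : numClosedFieldType) N (A : 'M[C]_N) : (\rank A <= 1)%N ->
  exists p q : 'I_N -> C, forall i j, A i j = p i * q j.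
Proof.
case: N A => [|N] A r1.
  by exists (fun _ => 0), (fun _ => 0) => [[]].
have E := mulmx_ebase A.
have [r0|r1'] : (\rank A = 0 \/ \rank A = 1)%N by lia.
  exists (fun _ => 0), (fun _ => 0) => i j.
  by rewrite -E r0 pid_mx_0 mulmx0 mul0mx mxE mul0r.
set L := col_ebase A in E; set U := row_ebase A in E.
exists (fun i => L i ord0), (fun j => U ord0 j) => i j.
rewrite -E r1' !mxE (bigD1 ord0) //= big1 ?addr0.
  rewrite mxE (bigD1 ord0) //= big1 ?addr0 ?mxE /= ?mulr1 //.
  move=> k kn0; rewrite mxE /=.
  have -> : (k < 1)%N = false by apply/negbTE; rewrite -leqNgt lt0n; exact: kn0.
  by rewrite andbF mulr0.
move=> l ln0; rewrite mxE big1 ?mul0r // => k _; rewrite mxE.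
case: (eqVneq (k : nat) l) => [kl|]; last by rewrite mulr0.
have -> : (k < 1)%N = false by rewrite kl; apply/negbTE; rewrite -leqNgt lt0n; exact: ln0.
by rewrite andbF mulr0.
Qed.

Lemma quadE (C : numClosedFieldType) m (B : 'M[C]_m) (v : 'cV[C]_m) :
  (ctrmx v *m B *m v) 0 0 = \sum_i \sum_j (v i 0)^* * B i j * v j 0.
Proof.
rewrite mxE (eq_bigr (fun j => \sum_i (ctrmx v 0 i * B i j * v j 0))); last first.
  by move=> j _; rewrite mxE mulr_suml.
rewrite exchange_big /=; apply: eq_bigr => i _; apply: eq_bigr => j _.
by rewrite /ctrmx !mxE.
Qed.

Lemma sum_delta (C : numClosedFieldType) m (i : 'I_m) (F : 'I_m -> C) :
  \sum_k (k == i)%:R * F k = F i.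
Proof.
rewrite (bigD1 i) //= eqxx mul1r big1 ?addr0 // => k /negbTE ->.
by rewrite mul0r.
Qed.

Lemma psd_diag (C : numClosedFieldType) m (A : 'M[C]_m) i : psd A -> 0 <= A i i.
Proof.
case=> _ /(_ (delta_mx i 0)); rewrite quadE.
have -> : \sum_i0 \sum_j ((delta_mx i 0 : 'cV[C]_m) i0 0)^* * A i0 j * (delta_mx i 0 : 'cV[C]_m) j 0
  = \sum_i0 (i0 == i)%:R * \sum_j (j == i)%:R * A i0 j.
  apply: eq_bigr => k _; rewrite mulr_sumr; apply: eq_bigr => l _.
  rewrite !mxE !andbT.
  by case: (k == i); case: (l == i); rewrite /= ?rmorph0 ?rmorph1 /= ?(mul0r, mulr0, mul1r, mulr1).
by rewrite sum_delta sum_delta.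
Qed.

Lemma herm_entry (C : numClosedFieldType) m (A : 'M[C]_m) i j : ctrmx A = A -> A j i = (A i j)^*.
Proof. by move=> H; rewrite -{1}H !mxE. Qed.

Lemma rank1_psd (C : numClosedFieldType) N (A : 'M[C]_N) : psd A -> (\rank A <= 1)%N ->
  exists u : 'I_N -> C, forall i j, A i j = u i * (u j)^*.
Proof.
move=> Hpsd /rank1_fact [p [q Epq]].
have Hh := fun i j => herm_entry i j (proj1 Hpsd).
case: (pickP (fun i => A i i != 0)) => [i0 Hi0|Hall]; last first.
  exists (fun _ => 0) => i j; rewrite mul0r.
  have Z : A i j * (A i j)^* = 0.
    rewrite -Hh !Epq.
    have := Hall i; have := Hall j; rewrite /= !Epq => /negbFE/eqP Hj /negbFE/eqP Hi.
    transitivity ((p i * q i) * (p j * q j)); first ring.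
    by rewrite Hi mul0r.
  have : `|A i j| ^+ 2 == 0 by rewrite normCK Z.
  by rewrite expf_eq0 /= normr_eq0 => /eqP.
have d0 : 0 < A i0 i0 by rewrite lt_def Hi0 psd_diag.
pose sd := sqrtC (A i0 i0).
have sd0 : sd != 0 by rewrite sqrtC_eq0.
have sdc : sd^* = sd by rewrite geC0_conj // sqrtC_ge0 ltW.
have sd2 : sd * sd = A i0 i0 by rewrite -expr2 sqrtCK.
exists (fun i => A i i0 / sd) => i j.
rewrite fmorph_div /= sdc -Hh.
have pq0 : p i0 * q i0 != 0 by rewrite -Epq.
rewrite !Epq.
have -> : p i * q i0 / sd * (p i0 * q j / sd) = p i * q i0 * (p i0 * q j) / (sd * sd) by field.
rewrite sd2 Epq.
move: pq0; rewrite mulf_eq0 negb_or => /andP [p0 q0].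
by field; rewrite q0 p0.
Qed.

Lemma Lent (C : numClosedFieldType) c M N (rho : C) m (A : 'M[C]_N) p q :
  Lmat c M N rho m A p q =
  Cconst c M N rho m * \sum_(k < m) c (N - m + k)%N * (A p q) ^+ k - (A p q) ^+ (m + M - N).
Proof.
rewrite /Lmat !mxE summxE; congr (_ * _ - _).
by apply: eq_bigr => k _; rewrite !mxE.
Qed.

Lemma qlin (C : numClosedFieldType) m (v : 'cV[C]_m) (K : C) (w : 'I_m -> C) (H : 'I_m -> 'M[C]_m) (G : 'M[C]_m) :
  (ctrmx v *m (K *: \sum_k w k *: H k - G) *m v) 0 0 =
  K * \sum_k w k * (ctrmx v *m H k *m v) 0 0 - (ctrmx v *m G *m v) 0 0.
Proof.
rewrite mulmxBr mulmxBl -scalemxAr -scalemxAl mulmx_sumr mulmx_suml !mxE summxE.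
congr (_ * _ - _); apply: eq_bigr => k _.
by rewrite -scalemxAr -scalemxAl mxE.
Qed.

Lemma qrank1 (C : numClosedFieldType) m (v : 'cV[C]_m) (x : 'I_m -> C) (k : nat) :
  (ctrmx v *m (\matrix_(i, j) (x i * (x j)^*) ^+ k) *m v) 0 0 =
  (\sum_i (v i 0)^* * x i ^+ k) * (\sum_i (v i 0)^* * x i ^+ k)^*.
Proof.
rewrite quadE rmorph_sum /= mulr_suml; apply: eq_bigr => i _.
rewrite mulr_sumr; apply: eq_bigr => j _.
rewrite mxE !rmorphM /= conjCK !rmorphXn /= exprMn; ring.
Qed.

Lemma core (C : numClosedFieldType) (rho : C) M N (c : nat -> C) m (A : 'M[C]_N) (f : 'I_m -> 'I_N) :
  0 < rho -> (N <= M)%N -> (m <= N)%N -> (forall j, (j < N)%N -> 0 < c j) -> P1 N rho A ->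
  psd (mxsub f f (Lmat c M N rho m A)).
Proof.
move=> rho0 NM mN cpos [Apsd [Ark Abd]].
have [u Au] := rank1_psd Apsd Ark.
pose Cc := Cconst c M N rho m.
have wpos : forall k : 'I_m, 0 < c (N - m + k)%N.
  move=> k; apply: cpos; have := ltn_ord k; lia.
have Cc0 : 0 <= Cc.
  apply: sumr_ge0 => j _; apply: mulr_ge0; last by rewrite invr_ge0 ltW.
  by apply: mulr_ge0; [exact: ler0n | apply: exprn_ge0; exact: ltW].
have Ment : forall i j, mxsub f f (Lmat c M N rho m A) i j =
   Cc * \sum_(k < m) c (N - m + k)%N * (u (f i) * (u (f j))^*) ^+ k - (u (f i) * (u (f j))^*) ^+ (m + M - N).
  by move=> i j; rewrite mxE Lent Au.
have CcE : Cc = Cconst c M N rho m by [].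
clearbody Cc.
have Ccc : Cc^* = Cc by rewrite geC0_conj.
split.
  apply/matrixP => i j; have E1 : ctrmx (mxsub f f (Lmat c M N rho m A)) i j = (mxsub f f (Lmat c M N rho m A) j i)^* by rewrite /ctrmx 2!mxE.
  rewrite E1 !Ment.
  rewrite rmorphB rmorphM rmorph_sum /= Ccc; congr (_ * _ - _).
    apply: eq_bigr => k _; rewrite rmorphM rmorphXn /= rmorphM /= conjCK (geC0_conj (ltW (wpos k))).
    by rewrite [_ * u _]mulrC.
  by rewrite rmorphXn /= rmorphM /= conjCK mulrC.
move=> v.
pose x i := u (f i).
have Mdec : mxsub f f (Lmat c M N rho m A) = Cc *: \sum_(k < m) c (N - m + k)%N *: (\matrix_(i, j) (x i * (x j)^*) ^+ k)
   - \matrix_(i, j) (x i * (x j)^*) ^+ (m + M - N).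
  apply/matrixP => i j; rewrite Ment !mxE summxE; congr (_ * _ - _).
  by apply: eq_bigr => k _; rewrite !mxE.
rewrite Mdec qlin !qrank1.
set s := fun k => \sum_i (v i 0)^* * x i ^+ k.
rewrite -/(s _) -normCK.
under eq_bigr do rewrite qrank1 -normCK.
pose r := sqrtC rho.
have r0 : 0 <= r by rewrite sqrtC_ge0 ltW.
have Hx : forall i, `|x i| <= r.
  move=> i; rewrite -(ler_pXn2r (_ : (0 < 2)%N)) ?nnegrE // /r sqrtCK normCK -Au.
  have := psd_diag (f i) Apsd => H; rewrite -(ger0_norm H); exact: Abd.
pose xs := map x (enum 'I_m).
have size_xs : size xs = m by rewrite size_map size_enum_ord.
have Hxs : forall y, y \in xs -> `|y| <= r by move=> y /mapP [i _ ->].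
pose co (k : 'I_m) := (-1) ^+ (m.-1 - k) * Tsym xs (M - N) (m.-1 - k).
have ident : forall i, x i ^+ (m + M - N) = \sum_(k < m) co k * x i ^+ k.
  move=> i; have := main_id xs (M - N) (x i).
  rewrite Esum_mem ?mul0r; last by apply: map_f; rewrite mem_enum.
  move/eqP; rewrite subr_eq0 => /eqP.
  rewrite /Gsum size_xs => <-; congr (_ ^+ _); lia.
have sn : s (m + M - N)%N = \sum_(k < m) co k * s k.
  rewrite /s; under eq_bigr do rewrite ident mulr_sumr.
  rewrite exchange_big /=; apply: eq_bigr => k _; rewrite mulr_sumr; apply: eq_bigr => i _; ring.
rewrite sn.
have CS := CSineq co s wpos.
have Abound : \sum_k `|co k| ^+ 2 / c (N - m + k)%N <= Cc.
  rewrite CcE /Cconst; apply: ler_sum => k _.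
  apply: ler_wpM2r; first by rewrite invr_ge0 ltW.
  have TBd := Tsym_bound (M - N) (m.-1 - k) r0 Hxs.
  rewrite size_xs TB_closed in TBd.
  have kM : (k < m)%N := ltn_ord k.
  have e1 : (M - N + (m.-1 - k) + 1 = (M - N + m) - k)%N by lia.
  have e2 : (M - N + (m.-1 - k) = M - N + m - k - 1)%N by lia.
  have e3 : (m.-1 - k = m - k - 1)%N by lia.
  have e4 : (M - N + m - k = m + M - N - k)%N by lia.
  rewrite e1 bin_sub in TBd; last by lia.
  rewrite e2 e3 in TBd.
  rewrite /co normrM normrX normrN1 expr1n mul1r.
  apply: (le_trans (_ : _ <= (('C(M - N + m, k) * 'C(M - N + m - k - 1, m - k - 1))%:R * r ^+ (m + M - N - k)) ^+ 2)).
    rewrite ler_pXn2r ?nnegrE //; first by rewrite e3 -e4.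
    apply: mulr_ge0; [exact: ler0n | exact: exprn_ge0].
  by rewrite exprMn -natrX expnMn -exprM [(_ * 2)%N]mulnC exprM /r sqrtCK.
rewrite subr_ge0; apply: (le_trans CS); apply: ler_wpM2r => //.
apply: sumr_ge0 => k _; apply: mulr_ge0; [exact: ltW | exact: exprn_ge0].
Qed.

Lemma psd_scale (C : numClosedFieldType) n (a : C) (B : 'M[C]_n) : 0 <= a -> psd B -> psd (a *: B).
Proof.
move=> a0 [Bh Bq]; split.
  apply/matrixP => i j; rewrite /ctrmx !mxE rmorphM /= geC0_conj //.
  by rewrite -{2}Bh !mxE.
move=> v; rewrite -scalemxAr -scalemxAl mxE; exact: mulr_ge0.
Qed.

Lemma Cc_pos (C : numClosedFieldType) (rho : C) M N (c : nat -> C) :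
  0 < rho -> (1 <= N)%N -> (N <= M)%N -> (forall j, (j < N)%N -> 0 < c j) ->
  0 < Cconst c M N rho N.
Proof.
move=> rho0 N1 NM cpos.
rewrite /Cconst (bigD1 (Ordinal N1)) //=.
set t := (X in 0 < X + _).
have h1 : 0 < t.
  apply: divr_gt0; last by apply: cpos; lia.
  apply: mulr_gt0; last exact: exprn_gt0.
  rewrite ltr0n muln_gt0 !expn_gt0 !bin_gt0 /=; apply/andP; split; lia.
apply: (lt_le_trans h1); rewrite lerDl.
apply: sumr_ge0 => j _; apply: mulr_ge0; last by rewrite invr_ge0 ltW // cpos //; have := ltn_ord j; lia.
by apply: mulr_ge0; [exact: ler0n | apply: exprn_ge0; exact: ltW].
Qed.

Unset Implicit Arguments.
Set Strict Implicit.

Theorem mainTheorem8 (C : numClosedFieldType) (rho : C) (M N : nat) (c : nat -> C) :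
  0 < rho -> (1 <= N)%N -> (N <= M)%N -> (forall j, (j < N)%N -> 0 < c j) ->
  (forall (m : nat) (A : 'M[C]_N), (1 <= m <= N)%N -> P1 N rho A ->
     forall f : 'I_m -> 'I_N, (forall i j : 'I_m, (i < j)%N -> (f i < f j)%N) ->
       psd (mxsub f f (Lmat c M N rho m A)))
  /\
  (forall A : 'M[C]_N, P1 N rho A -> psd (fpoly_entrywise c M N rho A)).
Proof.
move=> rho0 N1 NM cpos; split.
  move=> m A /andP [m1 mN] HA f _; exact: core.
move=> A HA.
have Cp := Cc_pos rho0 N1 NM cpos.
have Hc := core (fun i : 'I_N => i) rho0 NM (leqnn N) cpos HA.
have -> : fpoly_entrywise c M N rho A = (Cconst c M N rho N)^-1 *: mxsub (fun i : 'I_N => i) (fun i => i) (Lmat c M N rho N A).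
  apply/matrixP => i j; rewrite [LHS]mxE [RHS]mxE [in RHS]mxE Lent subnn addKn.
  have Cn : Cconst c M N rho N != 0 by rewrite gt_eqF.
  rewrite mulrBr mulrA mulVf // mul1r; congr (_ - _).
apply: psd_scale => //; rewrite invr_ge0 ltW //.
Qed.
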